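(* For each integer $r\ge 2$, the matrix $A'_r$ is $2$-modular.
   Context: An integer matrix $A$ is $\Delta$-modular if the determinant of every $\operatorname{rank}(A)\times\operatorname{rank}(A)$ submatrix has absolute value at most $\Delta$. $D_r$ denotes the $r\times\binom r2$ matrix whose columns are all vectors in $\mathbb{Z}^r$ with exactly two nonzero entries, the first (topmost) equal to $1$ and the second equal to $-1$. $A'_r$ is the $r\times(\binom{r+2}{2}-2)$ matrix $[\,I_r\mid D_r\mid B'_r\,]$, where $B'_r$ is the $r\times(r-1)$ matrix whose first two rows consist entirely of $1$'s, and whose last $r-2$ rows are $[\,-I_{r-2}\mid \mathbf 0\,]$ (i.e., in rows $3,\dots,r$ the first $r-2$ columns form $-I_{r-2}$ and the last column is zero). *)

(* Defs.v *)
From HB Require Import structures.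
From mathcomp Require Import all_boot all_order all_algebra.
Set Implicit Arguments. Unset Strict Implicit. Unset Printing Implicit Defensive.
Import Order.TTheory GRing.Theory Num.Theory.
Local Open Scope ring_scope.

Definition zrank m n (A : 'M[int]_(m, n)) : nat :=
  \rank (map_mx (fun z : int => z%:~R : rat) A).

(* Submatrices are given by arbitrary row/column selection maps; rows/columns in
   a different order only change the sign of det, and repeated indices give det 0. *)
Definition Delta_modular (Delta : int) m n (A : 'M[int]_(m, n)) : Prop :=
  forall (f : 'I_(zrank A) -> 'I_m) (g : 'I_(zrank A) -> 'I_n),
    `|\det (mxsub f g A)| <= Delta.

(* index set of the columns of D_r : pairs i < j, as sorted 2-tuples *)
Definition Dpairs (r : nat) := [set t : 2.-tuple 'I_r | sorted ltn (map val t)].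

Definition Dpair (r : nat) (k : 'I_'C(r, 2)) : 2.-tuple 'I_r :=
  enum_val (cast_ord (esym (card_ltn_sorted_tuples 2 r)) k : 'I_#|Dpairs r|).

Definition Dmx (r : nat) : 'M[int]_(r, 'C(r, 2)) :=
  \matrix_(i < r, k < 'C(r, 2))
    (((i == tnth (Dpair k) 0)%:R : int) - ((i == tnth (Dpair k) 1)%:R : int)).

(* B'_r : rows 1,2 all ones; rows 3..r are [ -I_{r-2} | 0 ] *)
Definition Bmx (r : nat) : 'M[int]_(r, r.-1) :=
  \matrix_(i < r, j < r.-1)
    (if (i < 2)%N then 1 else if (j : nat) == (i - 2)%N then -1 else 0).

Definition Amx (r : nat) : 'M[int]_(r, r + 'C(r, 2) + r.-1) :=
  row_mx (row_mx 1%:M (Dmx r)) (Bmx r).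

(* Main.v *)
Require Import Defs.
From mathcomp Require Import all_boot all_order all_algebra ring.
Set Implicit Arguments. Unset Strict Implicit. Unset Printing Implicit Defensive.
Import Order.TTheory GRing.Theory Num.Theory.
Local Open Scope ring_scope.

Definition ind n (a : option 'I_n) (i : 'I_n) : int := (Some i == a)%:R.

Lemma sum_ind n (a : option 'I_n) : \sum_i ind a i = (a != None)%:R.
Proof.
case: a => [k|] /=.
  rewrite (bigD1 k) //= big1 ?addr0 /ind ?eqxx // => i /negbTE ne.
  by rewrite (inj_eq (@Some_inj _)) ne.
by rewrite big1 // => i _.
Qed.

Lemma ind_lift n (i0 : 'I_n.+1) (a : option 'I_n.+1) (i : 'I_n) :
  ind a (lift i0 i) = ind (obind (unlift i0) a) i.
Proof.
rewrite /ind; case: a => [k|] //=.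
case: unliftP => [k' ->|->] /=.
  by rewrite !(inj_eq (@Some_inj _)) (inj_eq (@lift_inj _ _)).
by rewrite (inj_eq (@Some_inj _)) eq_sym (negbTE (neq_lift _ _)).
Qed.

Lemma ind_norm n (a b : option 'I_n) i : `|ind a i - ind b i| <= 1.
Proof. by rewrite /ind; case: (_ == a); case: (_ == b). Qed.

Lemma TU n (M : 'M[int]_n) (ga gb : 'I_n -> option 'I_n) :
  (forall i j, M i j = ind (ga j) i - ind (gb j) i) -> `|\det M| <= 1.
Proof.
elim: n M ga gb => [|n IH] M ga gb HM; first by rewrite det_mx00 normr1.
case: (boolP [exists j, (ga j == None) || (gb j == None)]).
  case/existsP => j Hj.
  have [i0 Hi0] : exists i0, forall i, i != i0 -> M i j = 0.
    case/orP: Hj => /eqP E.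
      case E2: (gb j) => [k|].
        exists k => i ne; rewrite HM E E2 /ind /= (inj_eq (@Some_inj _)) (negbTE ne).
        by rewrite subrr.
      by exists j => i _; rewrite HM E E2 /ind subrr.
    case E2: (ga j) => [k|].
      exists k => i ne; rewrite HM E E2 /ind /= (inj_eq (@Some_inj _)) (negbTE ne).
      by rewrite subrr.
    by exists j => i _; rewrite HM E E2 /ind subrr.
  rewrite (expand_det_col _ j) (bigD1 i0) //= big1 ?addr0; last first.
    by move=> i /Hi0 ->; rewrite mul0r.
  rewrite normrM -[1]mul1r; apply: ler_pM => //; first by rewrite HM ind_norm.
  rewrite /cofactor normrM normrX normrN1 expr1n mul1r.
  apply: (IH _ (fun j' => obind (unlift i0) (ga (lift j j')))
                (fun j' => obind (unlift i0) (gb (lift j j')))).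
  by move=> i j'; rewrite !mxE HM !ind_lift.
rewrite negb_exists => /forallP Hall.
suff -> : \det M = 0 by rewrite normr0.
pose v : 'rV[int]_n.+1 := const_mx 1.
have vM : v *m M = 0.
  apply/rowP => j; rewrite !mxE.
  under eq_bigr do rewrite mxE mul1r HM.
  rewrite sumrB !sum_ind.
  by move: (Hall j); rewrite negb_or => /andP [-> ->]; rewrite subrr.
have : (v *m (M *m \adj M)) 0 0 = 0 by rewrite mulmxA vM mul0mx mxE.
rewrite mul_mx_adj mul_mx_scalar mxE /v mxE mulr1 => ->.
by [].
Qed.
Set Implicit Arguments. Unset Strict Implicit. Unset Printing Implicit Defensive.
Import Order.TTheory GRing.Theory Num.Theory.
Local Open Scope ring_scope.

Definition setcol n (M : 'M[int]_n) j (c : 'I_n -> int) : 'M[int]_n :=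
  \matrix_(i, k) if k == j then c i else M i k.

Lemma det_col_lin n (M : 'M[int]_n) j (c1 c2 : 'I_n -> int) (x y : int) :
  (forall i, M i j = x * c1 i + y * c2 i) ->
  \det M = x * \det (setcol M j c1) + y * \det (setcol M j c2).
Proof.
move=> H; rewrite -det_tr -[\det (setcol M j c1)]det_tr -[\det (setcol M j c2)]det_tr.
apply: (determinant_multilinear (i0 := j)).
- by apply/rowP => k; rewrite !mxE eqxx H.
- apply/matrixP => k l; rewrite !mxE.
  by rewrite eq_sym (negbTE (neq_lift _ _)).
- apply/matrixP => k l; rewrite !mxE.
  by rewrite eq_sym (negbTE (neq_lift _ _)).
Qed.

Lemma det_col_eq n (M : 'M[int]_n) j1 j2 : j1 != j2 ->
  \det (setcol M j2 (fun i => M i j1)) = 0.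
Proof.
move=> ne; rewrite -det_tr; apply: (determinant_alternate ne) => k.
by rewrite !mxE eqxx (negbTE ne).
Qed.

Lemma core k n (M : 'M[int]_n) (p0 p1 : option 'I_n) (kind : 'I_n -> bool)
  (a b u : 'I_n -> option 'I_n) :
  (forall i j, M i j = if kind j then ind p0 i + ind p1 i - ind (u j) i
                       else ind (a j) i - ind (b j) i) ->
  (#|[set j | kind j]| <= k)%N -> `|\det M| <= 2.
Proof.
elim: k M kind a b u => [|k IH] M kind a b u HM Hk.
  have E : forall j, kind j = false.
    move=> j; apply/negbTE/negP => kj.
    by move: Hk; rewrite leqn0 cards_eq0 => /eqP/setP/(_ j); rewrite !inE kj.
  apply: (le_trans (TU (ga := a) (gb := b) _)) => // i j.
  by rewrite HM E.
case: (boolP [exists j, kind j]); last first.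
  rewrite negb_exists => /forallP E.
  apply: (le_trans (TU (ga := a) (gb := b) _)) => // i j.
  by rewrite HM (negbTE (E j)).
case/existsP => j1 kj1.
case: (boolP [exists j2, kind j2 && (j2 != j1)]).
  case/existsP => j2 /andP [kj2 ne].
  pose M' := setcol M j2 (fun i => M i j2 - M i j1).
  have -> : \det M = \det M'.
    rewrite (@det_col_lin _ M j2 (fun i => M i j2 - M i j1) (fun i => M i j1) 1 1).
      by rewrite (@det_col_eq _ M j1 j2) 1?eq_sym // mulr0 addr0 mul1r.
    by move=> i; rewrite !mul1r subrK.
  apply: (IH M' (fun j => kind j && (j != j2))
     (fun j => if j == j2 then u j1 else a j) (fun j => if j == j2 then u j2 else b j)
     u).
    move=> i j; rewrite /M' !mxE.
    case: (eqVneq j j2) => [->|nej] /=.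
      rewrite !HM kj1 kj2 /=; ring.
    by rewrite andbT.
  have -> : [set j | kind j && (j != j2)] = [set j | kind j] :\ j2.
    by apply/setP => j; rewrite !inE andbC.
  rewrite -ltnS (leq_trans _ Hk) // (cardsD1 j2 [set j | kind j]) inE kj2.
  by rewrite add1n ltnS.
rewrite negb_exists => /forallP Only.
have kindE : forall j, kind j = (j == j1).
  move=> j; case: (eqVneq j j1) => [->//|ne].
  by move: (Only j); rewrite ne andbT => /negbTE.
rewrite (@det_col_lin _ M j1 (fun i => ind p0 i - ind None i)
    (fun i => ind p1 i - ind (u j1) i) 1 1); last first.
  by move=> i; rewrite HM kj1 !mul1r /ind /= subr0 addrA.
rewrite !mul1r (le_trans (ler_normD _ _)) // -[2]/(1 + 1).
apply: lerD.
  apply: (TU (ga := fun j => if j == j1 then p0 else a j)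
             (gb := fun j => if j == j1 then None else b j)) => i j.
  rewrite !mxE; case: (eqVneq j j1) => [_//|ne].
  by rewrite HM kindE (negbTE ne).
apply: (TU (ga := fun j => if j == j1 then p1 else a j)
           (gb := fun j => if j == j1 then u j1 else b j)) => i j.
rewrite !mxE; case: (eqVneq j j1) => [_//|ne].
by rewrite HM kindE (negbTE ne).
Qed.
Set Implicit Arguments. Unset Strict Implicit. Unset Printing Implicit Defensive.
Import Order.TTheory GRing.Theory Num.Theory.
Local Open Scope ring_scope.

Definition pre n m (f : 'I_n -> 'I_m) (a : option 'I_m) : option 'I_n :=
  obind (fun k => [pick i | f i == k]) a.

Lemma ind_pre n m (f : 'I_n -> 'I_m) a i : injective f ->
  ind a (f i) = ind (pre f a) i.
Proof.
move=> inj; rewrite /ind /pre; case: a => [k|] //=.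
case: pickP => [i' /eqP fi'|none] /=.
  rewrite -fi' !(inj_eq (@Some_inj _)) (inj_eq inj) //.
by rewrite (inj_eq (@Some_inj _)) none.
Qed.

Lemma ind_insub r (x : 'I_r) m : ind (insub m) x = (val x == m)%:R.
Proof.
rewrite /ind; case: insubP => [u _ <-|/negP nm] /=.
  by rewrite (inj_eq (@Some_inj _)) (inj_eq val_inj).
case: eqP => // E; case: nm; rewrite -E; exact: ltn_ord.
Qed.

Section A.
Variable r : nat.
Definition kindA (k : 'I_(r + 'C(r, 2) + r.-1)) : bool :=
  if split k is inr _ then true else false.
Definition aA (k : 'I_(r + 'C(r, 2) + r.-1)) : option 'I_r :=
  match split k with inl k' => match split k' with inl i => Some i
     | inr d => Some (tnth (Dpair d) 0) end | inr _ => None end.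
Definition bA (k : 'I_(r + 'C(r, 2) + r.-1)) : option 'I_r :=
  match split k with inl k' => match split k' with inl i => None
     | inr d => Some (tnth (Dpair d) 1) end | inr _ => None end.
Definition uA (k : 'I_(r + 'C(r, 2) + r.-1)) : option 'I_r :=
  match split k with inr j => insub (val j).+2 | inl _ => None end.

Lemma AmxE x k : Amx r x k =
  if kindA k then ind (insub 0%N) x + ind (insub 1%N) x - ind (uA k) x
  else ind (aA k) x - ind (bA k) x.
Proof.
rewrite /kindA /aA /bA /uA /Amx -(splitK k).
  case: (split k) => [k'|j]; rewrite unsplitK /=.
  rewrite row_mxEl -(splitK k'); case: (split k') => [i|d]; rewrite unsplitK /=.
    by rewrite row_mxEl !mxE /ind /= subr0.
  by rewrite row_mxEr !mxE /ind.
rewrite row_mxEr !mxE !ind_insub.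
case: x => [[|[|x']] Hx] /=; rewrite ?subr0 ?addr0 ?add0r //.
rewrite !eqSS ?subSS ?subn0 ?subn2 /= eq_sym; by case: eqP.
Qed.
End A.
Set Implicit Arguments. Unset Strict Implicit. Unset Printing Implicit Defensive.
Import Order.TTheory GRing.Theory Num.Theory.
Local Open Scope ring_scope.

Theorem lemma3p2 (r : nat) : (2 <= r)%N -> Delta_modular 2%:Z (Amx r).
Proof.
move=> _ f g.
case: (boolP [exists i1, exists i2, (i1 != i2) && (f i1 == f i2)]).
  case/existsP => i1 /existsP [i2 /andP [ne /eqP E]].
  rewrite (determinant_alternate ne) ?normr0 // => j.
  by rewrite !mxE E.
rewrite negb_exists => /forallP H.
have inj : injective f.
  move=> x y E; apply/eqP; apply: contraT => ne.
  by move: (H x); rewrite negb_exists => /forallP/(_ y); rewrite ne E eqxx.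
apply: (core (k := zrank (Amx r)) (p0 := pre f (insub 0%N)) (p1 := pre f (insub 1%N))
   (kind := fun j => kindA (g j)) (a := fun j => pre f (aA (g j)))
   (b := fun j => pre f (bA (g j))) (u := fun j => pre f (uA (g j)))).
  move=> i j; rewrite mxE AmxE; case: (kindA _); by rewrite !ind_pre.
by rewrite -[X in (_ <= X)%N]card_ord max_card.
Qed.
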